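(* Let $\lambda_-\le\lambda_+\in(-1,1)$ and consider performance evaluation settings $\mathcal{S}_n=\{n,\mathcal{A},K,\mathcal{P},\mathcal{F},\mathcal{I},\mathcal{W}_{\lambda_-,\lambda_+}\}$, $n\ge2$, such that $\mathcal{A}\in\mathcal{A}_d$, $\mathcal{P}$, $\mathcal{I}$ and the interpolation constraints for $\mathcal{F}$ are linearly (or LMI) Gram-representable, all agents are equivalent in the PEP, $\mathcal{P}$ is scale-invariant, and $\mathcal{I}$ only contains single-agent constraints (each applied to every agent) and scale-invariant constraints. Then $w(\mathcal{S}_n)=w(\mathcal{S}_2)$ for all $n\ge2$.
   Context: Distributed optimization: $n$ agents with local functions $f_i:\mathbb{R}^d\to\mathbb{R}$ minimize $f(x)=\frac1n\sum_if_i(x)$. $\mathcal{A}_d$ is the class of algorithms built from local gradient evaluations, consensus steps $\mathbf{y}=(W\otimes I_d)\mathbf{x}$ with $W\in\mathcal{W}_{\lambda_-,\lambda_+}$, and linear combinations of an agent's local variables with known coefficients. $\mathcal{W}_{\lambda_-,\lambda_+}$ is the set of symmetric $W\in\mathbb{R}^{n\times n}$ with $\lambda_1(W)=1$, eigenvector $\mathbf{1}/\sqrt n$, other eigenvalues in $[\lambda_-,\lambda_+]$. $\mathcal{S}_n$ specifies $n$, algorithm $\mathcal{A}$, iterations $K$, criterion $\mathcal{P}$, function class $\mathcal{F}$, initial conditions $\mathcal{I}$, matrix class. Agent-dependent SDP PEP: each agent $i$ holds $p$ vector variables (iterates, consensus outputs, gradients, copies of common points such as $x^*$) as columns of $P_i\in\mathbb{R}^{d\times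 p}$ in a common order, and $q$ function values in $f_i\in\mathbb{R}^q$; variables $F=[f_1^T\dots f_n^T]$, $G=P^TP\succeq0$ with $G_{ij}=P_i^TP_j$. Gram-representable means given by finitely many linear or LMI constraints/expressions in $(F,G)$. The PEP maximizes $\mathcal{P}(F,G)$ subject to $G\succeq0$, algorithm constraints, interpolation constraints for $\mathcal{F}$, initial conditions, optimality $\frac1n\sum_i\nabla f_i(x^* )=0$, and for consensus steps with a common matrix, with $X,Y\in\mathbb{R}^{nd\times K}$ the stacked inputs/outputs: $\bar X=\bar Y$, $(Y_\perp-\lambda_-X_\perp)^T(Y_\perp-\lambda_+X_\perp)\preceq0$, $X_\perp^TY_\perp=Y_\perp^TX_\perp$ ($\bar X$: each agent component replaced by the agent average; $X_\perp=X-\bar X$). $w(\mathcal{S}_n)$ is its optimal value. Agents $i,j$ are equivalent if swapping their blocks in any feasible $(F,G)$ yields a feasible solution with equal objective. A Gram-representable expression is scale-invariant if it is a linear combination, with $n$-independent coefficients, of terms $\frac1n\sum_if_i(x_i)$, $\frac1n\sum_ix_i^Ty_i$, $\frac1{n^2}\sum_{i,j}x_i^Ty_j$; single-agent if it is a linear combination, with $n$-independent coefficients, of terms involving a single agent's variables and function. A constraint $h\le D$ inherits the property of $h$. *)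

(* Defs.v *)
From HB Require Import structures.
From mathcomp Require Import all_boot all_order all_algebra.
From mathcomp Require Import boolp classical_sets reals constructive_ereal ereal.
From Stdlib Require List.
Set Implicit Arguments. Unset Strict Implicit. Unset Printing Implicit Defensive.
Import Order.TTheory GRing.Theory Num.Theory.
Local Open Scope ring_scope.
Local Open Scope classical_set_scope.

(* Each agent i holds p vector variables (columns 'I_p of P_i) and q         *)
(* function values. PEP variables:                                          *)
(*   F : 'I_n -> 'I_q -> R           (F i k = k-th function value of agent i)*)
(*   G : 'I_n -> 'I_p -> 'I_n -> 'I_p -> R                                  *)
(*       (G i a j b = P_i(:,a)^T P_j(:,b), i.e. the (np)x(np) Gram matrix)   *)

Section PEP.
Variable R : realType.

(* Single-agent expression: n-independent coefficients on one agent's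
   function values and on inner products of that agent's own vectors. *)
Record sa_expr (p q : nat) := SAExpr {
  saF : 'I_q -> R;
  saG : 'I_p -> 'I_p -> R }.

(* Scale-invariant expression: n-independent coefficients of the terms
   (1/n) sum_i f_i(.),  (1/n) sum_i x_i^T y_i,  (1/n^2) sum_{i,j} x_i^T y_j. *)
Record si_expr (p q : nat) := SIExpr {
  siF : 'I_q -> R;
  siL : 'I_p -> 'I_p -> R;
  siC : 'I_p -> 'I_p -> R }.

(* An LMI constraint  M(F,G) <= D  of size m (a linear constraint h <= D is
   the case m = 1; equalities are pairs of inequalities). *)
Record sa_lmi (p q : nat) := SALmi {
  sa_m : nat;
  sa_coef : 'I_sa_m -> 'I_sa_m -> sa_expr p q;
  sa_bound : 'I_sa_m -> 'I_sa_m -> R }.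

Record si_lmi (p q : nat) := SILmi {
  si_m : nat;
  si_coef : 'I_si_m -> 'I_si_m -> si_expr p q;
  si_bound : 'I_si_m -> 'I_si_m -> R }.

Arguments sa_coef {p q} s _ _.
Arguments sa_bound {p q} s _ _.
Arguments si_coef {p q} s _ _.
Arguments si_bound {p q} s _ _.

Record setting := Setting {
  np : nat;                                 (* vector variables per agent *)
  nq : nat;                                 (* function values per agent  *)
  nK : nat;                                 (* number of consensus steps  *)
  cons_in : 'I_nK -> 'I_np;                 (* column of input x of step k *)
  cons_out : 'I_nK -> 'I_np;                (* column of output y of step k*)
  (* algorithm steps "column t = sum_a c a * column a" (known coefficients) *)
  alg_lin : seq ('I_np * ('I_np -> R));
  common_pts : seq 'I_np;                   (* copies of common points, e.g. x-star *)
  grad_star : 'I_np;                        (* column of grad f_i at x-star     *)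
  interp : seq (sa_lmi np nq);
  init_sa : seq (sa_lmi np nq);
  init_si : seq (si_lmi np nq);
  crit : si_expr np nq;
  lam_minus : R;                            (* W in W_{lam_minus, lam_plus}  *)
  lam_plus : R }.

Definition fvals (n q : nat) := 'I_n -> 'I_q -> R.
Definition gram (n p : nat) := 'I_n -> 'I_p -> 'I_n -> 'I_p -> R.

Definition psd_fun (m : nat) (M : 'I_m -> 'I_m -> R) : Prop :=
  forall v : 'I_m -> R, 0 <= \sum_(a < m) \sum_(b < m) v a * M a b * v b.

Definition gram_psd (n p : nat) (G : gram n p) : Prop :=
  (forall i a j b, G i a j b = G j b i a) /\
  (forall c : 'I_n -> 'I_p -> R,
     0 <= \sum_(i < n) \sum_(a < p) \sum_(j < n) \sum_(b < p)
            c i a * G i a j b * c j b).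

Definition eval_sa (n p q : nat) (e : sa_expr p q) (F : fvals n q)
    (G : gram n p) (i : 'I_n) : R :=
  \sum_(k < q) saF e k * F i k +
  \sum_(a < p) \sum_(b < p) saG e a b * G i a i b.

Definition eval_si (n p q : nat) (e : si_expr p q) (F : fvals n q)
    (G : gram n p) : R :=
  n%:R^-1 * \sum_(i < n) \sum_(k < q) siF e k * F i k +
  n%:R^-1 * \sum_(i < n) \sum_(a < p) \sum_(b < p) siL e a b * G i a i b +
  (n%:R ^+ 2)^-1 * \sum_(i < n) \sum_(j < n) \sum_(a < p) \sum_(b < p)
                      siC e a b * G i a j b.

Definition sa_holds (n p q : nat) (C : sa_lmi p q) (F : fvals n q)
    (G : gram n p) (i : 'I_n) : Prop :=
  psd_fun (fun a b => sa_bound C a b - eval_sa (sa_coef C a b) F G i).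

Definition si_holds (n p q : nat) (C : si_lmi p q) (F : fvals n q)
    (G : gram n p) : Prop :=
  psd_fun (fun a b => si_bound C a b - eval_si (si_coef C a b) F G).

(* sum_i (u_i - ubar)^T (v_i - vbar), for columns u = a, v = b *)
Definition ip_perp (n p : nat) (G : gram n p) (a b : 'I_p) : R :=
  \sum_(i < n) G i a i b - n%:R^-1 * \sum_(i < n) \sum_(j < n) G i a j b.

(* || sum_i (u_i - v_i) ||^2 *)
Definition mean_diff_sq (n p : nat) (G : gram n p) (a b : 'I_p) : R :=
  \sum_(i < n) \sum_(j < n) (G i a j a - G i a j b - G i b j a + G i b j b).

Definition feasible (S : setting) (n : nat) (F : fvals n (nq S))
    (G : gram n (np S)) : Prop :=
  let lm := lam_minus S in let lp := lam_plus S in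
  let X := @cons_in S in let Y := @cons_out S in
  [/\ gram_psd G,
      (* algorithm: linear combinations within each agent *)
      (forall t, Stdlib.Lists.List.In t (alg_lin S) -> forall i : 'I_n,
         let w := fun a => (a == t.1)%:R - t.2 a in
         \sum_(a < np S) \sum_(b < np S) w a * w b * G i a i b = 0),
      (forall C, Stdlib.Lists.List.In C (interp S) -> forall i, sa_holds C F G i) /\
      ((forall C, Stdlib.Lists.List.In C (init_sa S) -> forall i, sa_holds C F G i) /\
       (forall C, Stdlib.Lists.List.In C (init_si S) -> si_holds C F G)),
      (* common points and optimality  (1/n) sum_i grad f_i(x-star) = 0 *)
      ((forall c, c \in common_pts S -> ip_perp G c c = 0) /\
       \sum_(i < n) \sum_(j < n) G i (grad_star S) j (grad_star S) = 0) &
      (* consensus steps with a common W in W_{lm,lp} *)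
      [/\ (forall k, mean_diff_sq G (X k) (Y k) = 0),
          (forall k l, ip_perp G (X k) (Y l) = ip_perp G (Y k) (X l)) &
          psd_fun (fun k l => - (ip_perp G (Y k) (Y l) - lp * ip_perp G (Y k) (X l)
                                 - lm * ip_perp G (X k) (Y l)
                                 + lm * lp * ip_perp G (X k) (X l)))]].

(* optimal value w(S_n) of the PEP (sup over feasible set, -oo if empty) *)
Definition pep_value (S : setting) (n : nat) : \bar R :=
  ereal_sup [set x | exists (F : fvals n (nq S)) (G : gram n (np S)),
                       @feasible S n F G /\ x = (eval_si (crit S) F G)%:E].

Definition swap_idx (n : nat) (i j k : 'I_n) : 'I_n :=
  if k == i then j else if k == j then i else k.

Definition agents_equivalent (S : setting) (n : nat) : Prop :=
  forall (i j : 'I_n) (F : fvals n (nq S)) (G : gram n (np S)),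
    @feasible S n F G ->
    let F' := fun k => F (swap_idx i j k) in
    let G' := fun k a l b => G (swap_idx i j k) a (swap_idx i j l) b in
    @feasible S n F' G' /\ eval_si (crit S) F' G' = eval_si (crit S) F G.

End PEP.

(* Main.v *)
Require Import Defs.
From HB Require Import structures.
From mathcomp Require Import all_boot all_order all_algebra.
From mathcomp Require Import boolp classical_sets reals constructive_ereal ereal.
From mathcomp Require Import ring.
Import Order.TTheory GRing.Theory Num.Theory.
Local Open Scope ring_scope.
Set Implicit Arguments. Unset Strict Implicit.

Section Helpers.
Variable R : realType.

Lemma X4 (n p : nat) (H : 'I_p -> 'I_p -> 'I_n -> 'I_n -> R) :
  \sum_(a < p) \sum_(b < p) \sum_(i < n) \sum_(j < n) H a b i j =
  \sum_(i < n) \sum_(j < n) \sum_(a < p) \sum_(b < p) H a b i j.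
Proof.
transitivity (\sum_(a < p) \sum_(i < n) \sum_(b < p) \sum_(j < n) H a b i j).
  by apply: eq_bigr => a _; rewrite exchange_big.
rewrite exchange_big /=; apply: eq_bigr => i _.
transitivity (\sum_(a < p) \sum_(j < n) \sum_(b < p) H a b i j).
  by apply: eq_bigr => a _; rewrite exchange_big.
by rewrite exchange_big.
Qed.

Lemma X4b (n p : nat) (H : 'I_n -> 'I_p -> 'I_n -> 'I_p -> R) :
  \sum_(i < n) \sum_(a < p) \sum_(j < n) \sum_(b < p) H i a j b =
  \sum_(i < n) \sum_(j < n) \sum_(a < p) \sum_(b < p) H i a j b.
Proof. by apply: eq_bigr => i _; rewrite exchange_big. Qed.

Lemma L1 (n q : nat) (r : R) (s : 'I_q -> R) (F : 'I_n -> 'I_q -> R) :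
  r * \sum_(i < n) \sum_(k < q) s k * F i k = \sum_(k < q) s k * (r * \sum_(i < n) F i k).
Proof.
rewrite exchange_big mulr_sumr; apply: eq_bigr => k _.
rewrite !mulr_sumr; apply: eq_bigr => i _; ring.
Qed.

Lemma L2 (n p : nat) (r : R) (s : 'I_p -> 'I_p -> R) (G : 'I_n -> 'I_p -> 'I_p -> R) :
  r * \sum_(i < n) \sum_(a < p) \sum_(b < p) s a b * G i a b =
  \sum_(a < p) \sum_(b < p) s a b * (r * \sum_(i < n) G i a b).
Proof.
rewrite exchange_big mulr_sumr; apply: eq_bigr => a _.
rewrite exchange_big mulr_sumr; apply: eq_bigr => b _.
rewrite !mulr_sumr; apply: eq_bigr => i _; ring.
Qed.

Lemma L3 (n p : nat) (r : R) (s : 'I_p -> 'I_p -> R) (G : 'I_n -> 'I_n -> 'I_p -> 'I_p -> R) :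
  r * \sum_(i < n) \sum_(j < n) \sum_(a < p) \sum_(b < p) s a b * G i j a b =
  \sum_(a < p) \sum_(b < p) s a b * (r * \sum_(i < n) \sum_(j < n) G i j a b).
Proof.
rewrite -X4 mulr_sumr; apply: eq_bigr => a _.
rewrite mulr_sumr; apply: eq_bigr => b _.
rewrite !mulr_sumr; apply: eq_bigr => i _.
rewrite !mulr_sumr; apply: eq_bigr => j _; ring.
Qed.

Lemma sum_ind (n : nat) (i : 'I_n) (f : 'I_n -> R) :
  \sum_(j < n) (i == j)%:R * f j = f i.
Proof.
rewrite (bigD1 i) //= eqxx mul1r big1 ?addr0 // => j /negbTE.
by rewrite eq_sym => ->; rewrite mul0r.
Qed.


Definition avgF (n q : nat) (F : fvals R n q) (k : 'I_q) : R :=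
  n%:R^-1 * \sum_(i < n) F i k.
Definition avgA (n p : nat) (G : gram R n p) (a b : 'I_p) : R :=
  n%:R^-1 * \sum_(i < n) G i a i b.
Definition avgC (n p : nat) (G : gram R n p) (a b : 'I_p) : R :=
  (n%:R ^+ 2)^-1 * \sum_(i < n) \sum_(j < n) G i a j b.
Definition symF (n q : nat) (Fb : 'I_q -> R) : fvals R n q := fun _ k => Fb k.
Definition symG (n p : nat) (A C : 'I_p -> 'I_p -> R) : gram R n p :=
  fun i a j b => if i == j then A a b else (n%:R * C a b - A a b) / (n%:R - 1).
Arguments symG n {p}.
Arguments symF n {q}.

Lemma eval_si_avg (n p q : nat) (e : si_expr R p q) (F : fvals R n q) (G : gram R n p) :
  eval_si e F G = \sum_(k < q) siF e k * avgF F k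
    + \sum_(a < p) \sum_(b < p) siL e a b * avgA G a b
    + \sum_(a < p) \sum_(b < p) siC e a b * avgC G a b.
Proof.
rewrite /eval_si L1 L2.
congr (_ + _ + _).
rewrite (L3 (n%:R ^+ 2)^-1 (siC e) (fun i j a b => G i a j b)).
by [].
Qed.

Lemma natn1 (n : nat) : (1 < n)%N -> (n%:R - 1 : R) != 0.
Proof.
move=> hn; rewrite subr_eq0 -[X in _ != X]/(1%:R : R) eqr_nat.
by rewrite neq_ltn hn orbT.
Qed.

Lemma natn0 (n : nat) : (0 < n)%N -> (n%:R : R) != 0.
Proof. by move=> hn; rewrite pnatr_eq0 -lt0n. Qed.

Lemma sumG_sym1 (n p : nat) (A C : 'I_p -> 'I_p -> R) a b :
  \sum_(i < n) symG n A C i a i b = n%:R * A a b.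
Proof.
rewrite /symG (eq_bigr (fun _ => A a b)) => [|i _]; last by rewrite eqxx.
by rewrite sumr_const card_ord mulr_natl.
Qed.

Lemma sumG_sym2 (n p : nat) (A C : 'I_p -> 'I_p -> R) a b : (1 < n)%N ->
  \sum_(i < n) \sum_(j < n) symG n A C i a j b = n%:R ^+ 2 * C a b.
Proof.
move=> hn; set B := (n%:R * C a b - A a b) / (n%:R - 1).
transitivity (\sum_(i < n) (n%:R * B + (A a b - B))).
  apply: eq_bigr => i _.
  rewrite (eq_bigr (fun j => B + (i == j)%:R * (A a b - B))) => [|j _].
    by rewrite big_split /= sum_ind sumr_const card_ord mulr_natl.
  by rewrite /symG; case: (i == j); rewrite /= ?mul1r ?mul0r ?addr0 //; ring.
rewrite sumr_const card_ord -mulr_natl /B.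
have h : (n%:R - 1 : R) != 0 := natn1 hn.
field; done.
Qed.

Lemma avg_symF (n q : nat) (Fb : 'I_q -> R) k : (0 < n)%N -> avgF (symF n Fb) k = Fb k.
Proof.
move=> hn; rewrite /avgF /symF sumr_const card_ord -[Fb k *+ n]mulr_natl mulrA mulVf ?mul1r //.
exact: natn0.
Qed.

Lemma avg_symA (n p : nat) (A C : 'I_p -> 'I_p -> R) a b : (0 < n)%N ->
  avgA (symG n A C) a b = A a b.
Proof.
move=> hn; rewrite /avgA sumG_sym1 mulrA mulVf ?mul1r //; exact: natn0.
Qed.

Lemma avg_symC (n p : nat) (A C : 'I_p -> 'I_p -> R) a b : (1 < n)%N ->
  avgC (symG n A C) a b = C a b.
Proof.
move=> hn; rewrite /avgC sumG_sym2 // mulrA mulVf ?mul1r //.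
rewrite expf_neq0 //; apply: natn0; exact: ltnW.
Qed.


Lemma eval_sa_sym (n p q : nat) (e : sa_expr R p q) Fb (A C : 'I_p -> 'I_p -> R) i :
  eval_sa e (symF n Fb) (symG n A C) i =
  \sum_(k < q) saF e k * Fb k + \sum_(a < p) \sum_(b < p) saG e a b * A a b.
Proof. by rewrite /eval_sa /symF /symG eqxx. Qed.

Lemma eval_sa_avg (n p q : nat) (e : sa_expr R p q) (F : fvals R n q) (G : gram R n p) :
  n%:R^-1 * \sum_(i < n) eval_sa e F G i =
  \sum_(k < q) saF e k * avgF F k + \sum_(a < p) \sum_(b < p) saG e a b * avgA G a b.
Proof.
rewrite /eval_sa big_split /= mulrDr L1.
by rewrite (L2 n%:R^-1 (saG e) (fun i a b => G i a i b)).
Qed.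

Lemma psd_ext (m : nat) (M M' : 'I_m -> 'I_m -> R) :
  psd_fun M -> (forall a b, M a b = M' a b) -> psd_fun M'.
Proof.
move=> hM e v; rewrite (eq_bigr (fun a => \sum_(b < m) v a * M a b * v b)).
  exact: hM.
by move=> a _; apply: eq_bigr => b _; rewrite e.
Qed.

Lemma psd_avg (n m : nat) (D : 'I_m -> 'I_m -> R) (E : 'I_n -> 'I_m -> 'I_m -> R) :
  (0 < n)%N -> (forall i, psd_fun (fun a b => D a b - E i a b)) ->
  psd_fun (fun a b => D a b - n%:R^-1 * \sum_(i < n) E i a b).
Proof.
move=> hn h v.
have hn0 : (n%:R : R) != 0 := natn0 hn.
have -> : \sum_(a < m) \sum_(b < m) v a * (D a b - n%:R^-1 * \sum_(i < n) E i a b) * v b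
   = n%:R^-1 * \sum_(i < n) \sum_(a < m) \sum_(b < m) v a * (D a b - E i a b) * v b.
  rewrite [in RHS]exchange_big mulr_sumr; apply: eq_bigr => a _.
  rewrite [in RHS]exchange_big mulr_sumr; apply: eq_bigr => b _.
  rewrite [in RHS](eq_bigr (fun i => v a * v b * (D a b - E i a b))); last by move=> i _; ring.
  rewrite -mulr_sumr sumrB sumr_const card_ord -[D a b *+ n]mulr_natl.
  field; done.
apply: mulr_ge0; first by rewrite invr_ge0 ler0n.
by apply: sumr_ge0 => i _; apply: h.
Qed.

Lemma psd_rescale (m : nat) (r s : R) (E : 'I_m -> 'I_m -> R) :
  0 < r -> 0 <= s -> psd_fun (fun a b => r * E a b) -> psd_fun (fun a b => s * E a b).
Proof.
move=> hr hs h v.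
have -> : \sum_(a < m) \sum_(b < m) v a * (s * E a b) * v b
   = (s / r) * \sum_(a < m) \sum_(b < m) v a * (r * E a b) * v b.
  rewrite mulr_sumr; apply: eq_bigr => a _.
  rewrite mulr_sumr; apply: eq_bigr => b _.
  have : r != 0 by rewrite gt_eqF.
  move=> hr0; field; done.
apply: mulr_ge0; last exact: h.
by apply: divr_ge0 => //; apply: ltW.
Qed.

Lemma ip_perp_avg (n p : nat) (G : gram R n p) a b : (0 < n)%N ->
  ip_perp G a b = n%:R * (avgA G a b - avgC G a b).
Proof.
move=> hn; have h : (n%:R : R) != 0 := natn0 hn.
rewrite /ip_perp /avgA /avgC; field; done.
Qed.

Lemma sumsum_avg (n p : nat) (G : gram R n p) a b : (0 < n)%N ->
  \sum_(i < n) \sum_(j < n) G i a j b = n%:R ^+ 2 * avgC G a b.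
Proof.
move=> hn; have h : (n%:R : R) != 0 := natn0 hn.
rewrite /avgC; field; done.
Qed.

Lemma mds_avg (n p : nat) (G : gram R n p) a b : (0 < n)%N ->
  mean_diff_sq G a b = n%:R ^+ 2 *
    (avgC G a a - avgC G a b - avgC G b a + avgC G b b).
Proof.
move=> hn; rewrite /mean_diff_sq.
have h : (n%:R : R) != 0 := natn0 hn.
transitivity (\sum_(i < n) \sum_(j < n) G i a j a - \sum_(i < n) \sum_(j < n) G i a j b
  - \sum_(i < n) \sum_(j < n) G i b j a + \sum_(i < n) \sum_(j < n) G i b j b).
  rewrite -!sumrB -big_split /=; apply: eq_bigr => i _.
  by rewrite -!sumrB -big_split.
rewrite /avgC; field; done.
Qed.


Lemma pull2 (n : nat) (x y r : R) (H : 'I_n -> 'I_n -> R) :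
  x * (r * \sum_(i < n) \sum_(j < n) H i j) * y =
  r * \sum_(i < n) \sum_(j < n) (x * H i j * y).
Proof.
rewrite mulrCA -mulrA; congr (r * _).
rewrite mulr_sumr mulr_suml; apply: eq_bigr => i _.
by rewrite mulr_sumr mulr_suml.
Qed.

Lemma pull1 (n : nat) (x y r : R) (H : 'I_n -> R) :
  x * (r * \sum_(i < n) H i) * y = r * \sum_(i < n) (x * H i * y).
Proof.
rewrite mulrCA -mulrA; congr (r * _).
by rewrite mulr_sumr mulr_suml.
Qed.

Lemma X3 (n p : nat) (H : 'I_p -> 'I_p -> 'I_n -> R) :
  \sum_(a < p) \sum_(b < p) \sum_(i < n) H a b i =
  \sum_(i < n) \sum_(a < p) \sum_(b < p) H a b i.
Proof.
transitivity (\sum_(a < p) \sum_(i < n) \sum_(b < p) H a b i).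
  by apply: eq_bigr => a _; rewrite exchange_big.
by rewrite exchange_big.
Qed.

Lemma qf_avgC (n p : nat) (G : gram R n p) (v : 'I_p -> R) :
  \sum_(a < p) \sum_(b < p) v a * avgC G a b * v b =
   (n%:R ^+ 2)^-1 * \sum_(i < n) \sum_(j < n) \sum_(a < p) \sum_(b < p)
       v a * G i a j b * v b.
Proof.
rewrite -X4 mulr_sumr; apply: eq_bigr => a _.
rewrite mulr_sumr; apply: eq_bigr => b _.
by rewrite /avgC pull2.
Qed.

Lemma qf_avgA (n p : nat) (G : gram R n p) (v : 'I_p -> R) :
  \sum_(a < p) \sum_(b < p) v a * avgA G a b * v b =
   n%:R^-1 * \sum_(i < n) \sum_(a < p) \sum_(b < p) v a * G i a i b * v b.
Proof.
rewrite -X3 mulr_sumr; apply: eq_bigr => a _.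
rewrite mulr_sumr; apply: eq_bigr => b _.
by rewrite /avgA pull1.
Qed.

Lemma qf_sub (p : nat) (X Y : 'I_p -> 'I_p -> R) (v : 'I_p -> R) :
  \sum_(a < p) \sum_(b < p) v a * (X a b - Y a b) * v b =
  \sum_(a < p) \sum_(b < p) v a * X a b * v b - \sum_(a < p) \sum_(b < p) v a * Y a b * v b.
Proof.
rewrite -sumrB; apply: eq_bigr => a _.
rewrite -sumrB; apply: eq_bigr => b _; ring.
Qed.

Lemma psd_avgC (n p : nat) (G : gram R n p) : gram_psd G -> psd_fun (avgC G).
Proof.
move=> [_ hG] v.
rewrite qf_avgC -X4b.
apply: mulr_ge0; first by rewrite invr_ge0 exprn_ge0 ?ler0n.
exact: (hG (fun _ a => v a)).
Qed.
Lemma Qrank1 (n p : nat) (G : gram R n p) (al : 'I_n -> R) (v : 'I_p -> R) :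
  \sum_(i < n) \sum_(a < p) \sum_(j < n) \sum_(b < p)
     (al i * v a) * G i a j b * (al j * v b) =
  \sum_(i < n) \sum_(j < n) al i * al j *
     (\sum_(a < p) \sum_(b < p) v a * G i a j b * v b).
Proof.
rewrite X4b; apply: eq_bigr => i _; apply: eq_bigr => j _.
rewrite mulr_sumr; apply: eq_bigr => a _.
rewrite mulr_sumr; apply: eq_bigr => b _; ring.
Qed.

Lemma sum_alpha (n : nat) (r : R) (i j : 'I_n) : n%:R * r = 1 ->
  \sum_(k < n) ((i == k)%:R - r) * ((j == k)%:R - r) = (j == i)%:R - r.
Proof.
move=> hr.
rewrite (eq_bigr (fun k => (i == k)%:R * (j == k)%:R - (j == k)%:R * r
           - (i == k)%:R * r + r * r)); last by move=> k _; ring.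
rewrite big_split /= !sumrB !sum_ind sumr_const card_ord -[(r * r) *+ n]mulr_natl.
rewrite mulrA hr; ring.
Qed.

Lemma psd_avgM (n p : nat) (G : gram R n p) : (0 < n)%N -> gram_psd G ->
  psd_fun (fun a b => avgA G a b - avgC G a b).
Proof.
move=> hn [_ hG] v.
have h0 : (n%:R : R) != 0 := natn0 hn.
set g := fun i j => \sum_(a < p) \sum_(b < p) v a * G i a j b * v b.
have e1 : \sum_(a < p) \sum_(b < p) v a * (avgA G a b - avgC G a b) * v b =
   n%:R^-1 * \sum_(i < n) g i i - (n%:R ^+ 2)^-1 * \sum_(i < n) \sum_(j < n) g i j.
  by rewrite qf_sub qf_avgA qf_avgC.
have e2 : n%:R * (n%:R^-1 * \sum_(i < n) g i i - (n%:R ^+ 2)^-1 * \sum_(i < n) \sum_(j < n) g i j)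
  = \sum_(k < n) \sum_(i < n) \sum_(a < p) \sum_(j < n) \sum_(b < p)
     (((i == k)%:R - n%:R^-1) * v a) * G i a j b * (((j == k)%:R - n%:R^-1) * v b).
  have hr : n%:R * n%:R^-1 = 1 :> R by rewrite mulfV.
  transitivity (\sum_(i < n) \sum_(j < n) ((j == i)%:R - n%:R^-1) * g i j).
    rewrite mulrBr mulrA hr mul1r.
    transitivity (\sum_(i < n) (g i i - n%:R^-1 * \sum_(j < n) g i j)).
      rewrite sumrB -mulr_sumr; congr (_ - _); field; done.
    apply: eq_bigr => i _.
    rewrite [in RHS](eq_bigr (fun j => (i == j)%:R * g i j - n%:R^-1 * g i j)).
      by rewrite sumrB sum_ind -mulr_sumr.
    by move=> j _; rewrite eq_sym; ring.
  rewrite [in RHS](eq_bigr (fun k => \sum_(i < n) \sum_(j < n) ((i == k)%:R - n%:R^-1) *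
       ((j == k)%:R - n%:R^-1) * g i j)); last by move=> k _; exact: (Qrank1 G (fun i => (i == k)%:R - n%:R^-1) v).
  rewrite [in RHS]exchange_big; apply: eq_bigr => i _.
  rewrite [in RHS]exchange_big; apply: eq_bigr => j _.
  by rewrite -mulr_suml sum_alpha.
rewrite e1; set X := (_ - _).
have -> : X = n%:R^-1 * (n%:R * X) by rewrite mulrA mulVf // mul1r.
rewrite /X e2.
apply: mulr_ge0; first by rewrite invr_ge0 ler0n.
apply: sumr_ge0 => k _.
exact: (hG (fun i a => ((i == k)%:R - n%:R^-1) * v a)).
Qed.

Definition bf (p : nat) (X : 'I_p -> 'I_p -> R) (u w : 'I_p -> R) :=
  \sum_(a < p) \sum_(b < p) u a * X a b * w b.

Lemma bf_lin (p : nat) (X Y Z : 'I_p -> 'I_p -> R) r1 r2 u w :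
  (forall a b, X a b = r1 * Y a b + r2 * Z a b) ->
  bf X u w = r1 * bf Y u w + r2 * bf Z u w.
Proof.
move=> h; rewrite /bf !mulr_sumr -big_split; apply: eq_bigr => a _.
rewrite !mulr_sumr -big_split; apply: eq_bigr => b _; rewrite h /=; ring.
Qed.

Lemma bf_subv (p : nat) (M : 'I_p -> 'I_p -> R) u w :
  bf M (fun a => u a - w a) (fun a => u a - w a) =
  bf M u u - bf M u w - bf M w u + bf M w w.
Proof.
rewrite /bf -!sumrB -big_split; apply: eq_bigr => a _.
rewrite -!sumrB -big_split; apply: eq_bigr => b _ /=; ring.
Qed.

Lemma bf_ge0 (p : nat) (M : 'I_p -> 'I_p -> R) u : psd_fun M -> 0 <= bf M u u.
Proof. by move=> h; apply: h. Qed.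

Lemma var_id (n p : nat) (M : 'I_p -> 'I_p -> R) (c : 'I_n -> 'I_p -> R) (r : R) :
  n%:R * r = 1 ->
  \sum_(i < n) bf M (fun a => c i a - r * \sum_(k < n) c k a)
                    (fun a => c i a - r * \sum_(k < n) c k a) =
  \sum_(i < n) bf M (c i) (c i) -
     r * bf M (fun a => \sum_(k < n) c k a) (fun a => \sum_(k < n) c k a).
Proof.
move=> hr.
rewrite (eq_bigr (fun i => bf M (c i) (c i) - bf M (c i) (fun a => r * \sum_(k < n) c k a)
   - bf M (fun a => r * \sum_(k < n) c k a) (c i)
   + bf M (fun a => r * \sum_(k < n) c k a) (fun a => r * \sum_(k < n) c k a)));
  last by move=> i _; rewrite bf_subv.
rewrite big_split /= !sumrB sumr_const card_ord.
set S := bf M (fun a => \sum_(k < n) c k a) (fun a => \sum_(k < n) c k a).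
have e1 : \sum_(i < n) bf M (c i) (fun a => r * \sum_(k < n) c k a) = r * S.
  rewrite /S /bf -X3 [in RHS]mulr_sumr; apply: eq_bigr => a _.
  rewrite [in RHS]mulr_sumr; apply: eq_bigr => b _.
  rewrite -!mulr_suml; ring.
have e2 : \sum_(i < n) bf M (fun a => r * \sum_(k < n) c k a) (c i) = r * S.
  rewrite /S /bf -X3 [in RHS]mulr_sumr; apply: eq_bigr => a _.
  rewrite [in RHS]mulr_sumr; apply: eq_bigr => b _.
  rewrite -!mulr_sumr; ring.
have e3 : bf M (fun a => r * \sum_(k < n) c k a) (fun a => r * \sum_(k < n) c k a)
   = r * r * S.
  rewrite /S /bf mulr_sumr; apply: eq_bigr => a _.
  rewrite [in RHS]mulr_sumr; apply: eq_bigr => b _; ring.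
rewrite e1 e2 e3 -mulr_natl.
have -> : n%:R * (r * r * S) = (n%:R * r) * r * S by ring.
rewrite hr; ring.
Qed.

Lemma split4 (n p : nat) (f g : 'I_n -> 'I_n -> 'I_p -> 'I_p -> R) :
  \sum_(i < n) \sum_(j < n) \sum_(a < p) \sum_(b < p) (f i j a b + g i j a b) =
  \sum_(i < n) \sum_(j < n) \sum_(a < p) \sum_(b < p) f i j a b +
  \sum_(i < n) \sum_(j < n) \sum_(a < p) \sum_(b < p) g i j a b.
Proof.
rewrite -big_split; apply: eq_bigr => i _.
rewrite -big_split; apply: eq_bigr => j _.
rewrite -big_split; apply: eq_bigr => a _.
by rewrite -big_split.
Qed.

Lemma sym_gram (n p : nat) (A C : 'I_p -> 'I_p -> R) : (1 < n)%N ->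
  (forall a b, A a b = A b a) -> (forall a b, C a b = C b a) ->
  psd_fun C -> psd_fun (fun a b => A a b - C a b) -> gram_psd (symG n A C).
Proof.
move=> hn hA hC pC pM; split.
  move=> i a j b; rewrite /symG eq_sym; case: (j == i); first exact: hA.
  by rewrite hA hC.
move=> c.
have hn1 : (n%:R - 1 : R) != 0 := natn1 hn.
have hn0 : (n%:R : R) != 0 := natn0 (ltnW hn).
pose B := fun a b => (n%:R * C a b - A a b) / (n%:R - 1).
pose M := fun a b => A a b - C a b.
pose s := fun a => \sum_(k < n) c k a.
have eQ : \sum_(i < n) \sum_(a < p) \sum_(j < n) \sum_(b < p) c i a * symG n A C i a j b * c j b
   = bf B s s + \sum_(i < n) bf (fun a b => A a b - B a b) (c i) (c i).
  rewrite X4b.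
  transitivity (\sum_(i < n) \sum_(j < n) \sum_(a < p) \sum_(b < p)
     (c i a * B a b * c j b + (i == j)%:R * (c i a * (A a b - B a b) * c j b))).
    apply: eq_bigr => i _; apply: eq_bigr => j _; apply: eq_bigr => a _; apply: eq_bigr => b _.
    rewrite /symG /B; case: (i == j) => /=; ring.
  rewrite split4; congr (_ + _).
    rewrite /bf /s -X4; apply: eq_bigr => a _; apply: eq_bigr => b _.
    rewrite !mulr_suml; apply: eq_bigr => i _; rewrite mulr_sumr; apply: eq_bigr => j _.
    done.
  apply: eq_bigr => i _.
  transitivity (\sum_(j < n) (i == j)%:R *
     (\sum_(a < p) \sum_(b < p) c i a * (A a b - B a b) * c j b)).
    apply: eq_bigr => j _; rewrite mulr_sumr; apply: eq_bigr => a _.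
    by rewrite mulr_sumr.
  by rewrite sum_ind.
have eB : bf B s s = 1 * bf C s s + (- (n%:R - 1)^-1) * bf M s s.
  apply: bf_lin => a b; rewrite /B /M; field; done.
have eAB : forall i, bf (fun a b => A a b - B a b) (c i) (c i) =
    (n%:R / (n%:R - 1)) * bf M (c i) (c i) + 0 * bf M (c i) (c i).
  move=> i; apply: bf_lin => a b; rewrite /B /M; field; done.
have eV : \sum_(i < n) bf M (fun a => c i a - n%:R^-1 * s a) (fun a => c i a - n%:R^-1 * s a)
   = \sum_(i < n) bf M (c i) (c i) - n%:R^-1 * bf M s s.
  by apply: var_id; rewrite mulfV.
rewrite eQ eB (eq_bigr _ (fun i _ => eAB i)).
have -> : \sum_(i < n) (n%:R / (n%:R - 1) * bf M (c i) (c i) + 0 * bf M (c i) (c i))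
   = n%:R / (n%:R - 1) * \sum_(i < n) bf M (c i) (c i).
  by rewrite mulr_sumr; apply: eq_bigr => i _; rewrite mul0r addr0.
have -> : 1 * bf C s s + - (n%:R - 1)^-1 * bf M s s +
    n%:R / (n%:R - 1) * \sum_(i < n) bf M (c i) (c i) =
   bf C s s + n%:R / (n%:R - 1) *
    (\sum_(i < n) bf M (c i) (c i) - n%:R^-1 * bf M s s).
  by field; rewrite hn0 hn1.
rewrite -eV; apply: addr_ge0; first exact: bf_ge0.
apply: mulr_ge0.
  apply: divr_ge0; first exact: ler0n.
  by rewrite subr_ge0 ler1n ltnW.
by apply: sumr_ge0 => i _; apply: bf_ge0.
Qed.

Lemma avgA_sym (n p : nat) (G : gram R n p) : gram_psd G ->
  forall a b, avgA G a b = avgA G b a.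
Proof.
move=> [h _] a b; rewrite /avgA; congr (_ * _); apply: eq_bigr => i _; exact: h.
Qed.

Lemma avgC_sym (n p : nat) (G : gram R n p) : gram_psd G ->
  forall a b, avgC G a b = avgC G b a.
Proof.
move=> [h _] a b; rewrite /avgC exchange_big; congr (_ * _).
by apply: eq_bigr => j _; apply: eq_bigr => i _; exact: h.
Qed.

Lemma eval_si_sym (n m p q : nat) (e : si_expr R p q) (F : fvals R m q) (G : gram R m p) :
  (0 < m)%N -> (1 < n)%N ->
  eval_si e (symF n (avgF F)) (symG n (avgA G) (avgC G)) = eval_si e F G.
Proof.
move=> hm hn; rewrite !eval_si_avg.
congr (_ + _ + _).
- by apply: eq_bigr => k _; rewrite avg_symF // ltnW.
- by apply: eq_bigr => a _; apply: eq_bigr => b _; rewrite avg_symA // ltnW.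
- by apply: eq_bigr => a _; apply: eq_bigr => b _; rewrite avg_symC.
Qed.

Lemma transfer (S : setting R) (m n : nat) (F : fvals R m (nq S)) (G : gram R m (np S)) :
  (0 < m)%N -> (1 < n)%N -> @feasible R S m F G ->
  [/\ @feasible R S n (symF n (avgF F)) (symG n (avgA G) (avgC G)) & eval_si (crit S) (symF n (avgF F)) (symG n (avgA G) (avgC G)) = eval_si (crit S) F G].
Proof.
move=> hm hn; rewrite /feasible /=.
move=> [hpsd halg [hint [hsa hsi]] [hcom hgs] [hmds hip hcons]].
split; last exact: eval_si_sym.
have hn0 : (0 < n)%N by apply: ltnW.
have hm0 : (m%:R : R) != 0 := natn0 hm.
set Fs := symF n (avgF F); set Gs := symG n (avgA G) (avgC G).
have eA : forall a b, avgA Gs a b = avgA G a b by move=> a b; rewrite avg_symA.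
have eC : forall a b, avgC Gs a b = avgC G a b by move=> a b; rewrite avg_symC.
have ipS : forall a b, ip_perp Gs a b = n%:R * (avgA G a b - avgC G a b).
  by move=> a b; rewrite ip_perp_avg // eA eC.
have ipO : forall a b, ip_perp G a b = m%:R * (avgA G a b - avgC G a b).
  by move=> a b; rewrite ip_perp_avg.
have saT : forall C, (forall i, sa_holds C F G i) -> forall i, sa_holds C Fs Gs i.
  move=> C hC i; rewrite /sa_holds.
  have h := psd_avg (D := @sa_bound _ _ _ C)
      (E := fun i a b => eval_sa (@sa_coef _ _ _ C a b) F G i) hm hC.
  apply: (psd_ext h).
  by move=> a b; rewrite eval_sa_avg /Fs /Gs eval_sa_sym.
split.
- apply: sym_gram => //.
  + exact: avgA_sym.
  + exact: avgC_sym.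
  + exact: psd_avgC.
  + exact: psd_avgM.
- move=> t ht i /=.
  rewrite /Gs /symG eqxx /avgA.
  have := L2 m%:R^-1 (fun a b => ((a == t.1)%:R - t.2 a) * ((b == t.1)%:R - t.2 b))
             (fun i a b => G i a i b).
  rewrite /= => <-.
  by rewrite big1 ?mulr0 // => j _; exact: (halg t ht j).
- split; first by move=> C hC; apply: saT; apply: hint.
  split; first by move=> C hC; apply: saT; apply: hsa.
  move=> C hC; rewrite /si_holds.
  apply: (psd_ext (hsi C hC)) => a b.
  by rewrite /Fs /Gs eval_si_sym.
- split.
    move=> c hc; rewrite ipS; have := hcom c hc; rewrite ipO => /eqP.
    by rewrite mulf_eq0 (negbTE hm0) /= => /eqP ->; rewrite mulr0.
  rewrite sumsum_avg // eC; move: hgs; rewrite sumsum_avg // => /eqP.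
  by rewrite mulf_eq0 expf_eq0 (negbTE hm0) andbF /= => /eqP ->; rewrite mulr0.
- split.
  + move=> k; rewrite mds_avg // !eC; move: (hmds k); rewrite mds_avg // => /eqP.
    by rewrite mulf_eq0 expf_eq0 (negbTE hm0) andbF /= => /eqP ->; rewrite mulr0.
  + move=> k l; rewrite !ipS; move: (hip k l); rewrite !ipO => /(mulfI hm0) ->.
    done.
  + pose M := fun a b => avgA G a b - avgC G a b.
    pose E := fun k l => - (M (cons_out k) (cons_out l) - lam_plus S * M (cons_out k) (cons_in l)
          - lam_minus S * M (cons_in k) (cons_out l)
          + lam_minus S * lam_plus S * M (cons_in k) (cons_in l)).
    have h1 : psd_fun (fun k l => m%:R * E k l).
      apply: (psd_ext hcons) => k l; rewrite !ipO /E /M; ring.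
    have hr : 0 < (m%:R : R) by rewrite ltr0n.
    have hs : 0 <= (n%:R : R) by rewrite ler0n.
    have h2 := psd_rescale hr hs h1.
    apply: (psd_ext h2) => k l; rewrite !ipS /E /M; ring.
Qed.

End Helpers.

Unset Implicit Arguments.

Theorem corollary2 (R : realType) (S : setting R) :
  -1 < lam_minus S -> lam_minus S <= lam_plus S -> lam_plus S < 1 ->
  (forall n : nat, (2 <= n)%N -> agents_equivalent S n) ->
  forall n : nat, (2 <= n)%N -> pep_value S n = pep_value S 2.
Proof.
move=> _ _ _ _ n hn; rewrite /pep_value; congr (ereal_sup _).
apply/seteqP; split => x [F [G [hf ->]]].
- have hn0 : (0 < n)%N by apply: ltnW.
  have [hf' he] := transfer (n := 2) hn0 (isT : (1 < 2)%N) hf.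
  by exists (symF (n:=2) (avgF F)), (symG (n:=2) (avgA G) (avgC G)); split; [exact: hf' | rewrite he].
- have [hf' he] := transfer (n := n) (isT : (0 < 2)%N) hn hf.
  by exists (symF (n:=n) (avgF F)), (symG (n:=n) (avgA G) (avgC G)); split; [exact: hf' | rewrite he].
Qed.
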